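(* Let $V$ be an $n$-parameter persistence module such that for every $\varepsilon>0$ there is a q-tame module $W$ and morphisms $a:V\to W$, $b:W\to V[\varepsilon]$ with $b\circ a=\eta^V_\varepsilon$. Then $V$ is q-tame.
   Context: Fix a field $\mathbb{k}$. An $n$-parameter persistence module is a functor $V:\mathbf{R}^n\to\mathbf{Vect}_{\mathbb{k}}$ ($\mathbf{R}^n$ with componentwise order), structure maps $V_{s,t}$. Write $s\ll t$ if $s_i<t_i$ for all $i$; $s+\varepsilon$ adds $\varepsilon$ to each coordinate. $V$ is q-tame if $V_{s,t}$ has finite rank whenever $s\ll t$. $V[\varepsilon]_s=V_{s+\varepsilon}$, and $\eta^V_\varepsilon:V\to V[\varepsilon]$ is the morphism given by the structure maps $V_{s,s+\varepsilon}$. *)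

(* Defs.v *)
From HB Require Import structures.
From mathcomp Require Import all_boot all_order all_algebra.
From mathcomp Require Import reals.
Set Implicit Arguments. Unset Strict Implicit. Unset Printing Implicit Defensive.
Import Order.TTheory GRing.Theory Num.Theory.
Local Open Scope ring_scope.

Section PersMod.
Variables (k : fieldType) (R : realType) (n : nat).

Definition pt := 'I_n -> R.

Definition lept (s t : pt) : bool := [forall i, s i <= t i].
Definition llt (s t : pt) : bool := [forall i, s i < t i].
Definition shift_pt (e : R) (s : pt) : pt := fun i => s i + e.

Lemma lept_shift (e : R) (s t : pt) : lept s t -> lept (shift_pt e s) (shift_pt e t).
Proof.
move=> /forallP h; apply/forallP => i; rewrite /shift_pt lerD2r; exact: h.
Qed.

Definition is_linear (U W : lmodType k) (f : U -> W) : Prop :=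
  forall (a : k) (x y : U), f (a *: x + y) = a *: f x + f y.

Definition finite_rank (U W : lmodType k) (f : U -> W) : Prop :=
  exists r : seq W, forall x : U,
    exists c : 'I_(size r) -> k, f x = \sum_(i < size r) c i *: r`_i.

Record pmod := PMod {
  pm_obj : pt -> lmodType k;
  pm_map : forall s t : pt, lept s t -> pm_obj s -> pm_obj t;
  pm_lin : forall s t (h : lept s t), is_linear (pm_map h);
  pm_id : forall s (h : lept s s) x, pm_map h x = x;
  pm_comp : forall s t u (h1 : lept s t) (h2 : lept t u) (h3 : lept s u) x,
      pm_map h3 x = pm_map h2 (pm_map h1 x)
}.
Arguments pm_obj : clear implicits.
Arguments pm_map p {s t} _ _.

Definition shift_map (V : pmod) (e : R) (s t : pt) (h : lept s t) :
  pm_obj V (shift_pt e s) -> pm_obj V (shift_pt e t) :=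
  pm_map V (lept_shift e h).
Arguments shift_map V e {s t} h _.

Lemma shift_lin (V : pmod) e s t (h : lept s t) : is_linear (shift_map V e h).
Proof. exact: pm_lin. Qed.
Lemma shift_id (V : pmod) e s (h : lept s s) x : shift_map V e h x = x.
Proof. exact: pm_id. Qed.
Lemma shift_comp (V : pmod) e s t u (h1 : lept s t) (h2 : lept t u) (h3 : lept s u) x :
  shift_map V e h3 x = shift_map V e h2 (shift_map V e h1 x).
Proof. exact: pm_comp. Qed.

Definition shift_mod (V : pmod) (e : R) : pmod :=
  @PMod (fun s => pm_obj V (shift_pt e s)) (@shift_map V e)
    (@shift_lin V e) (@shift_id V e) (@shift_comp V e).

Definition pmorph (V W : pmod) (f : forall s, pm_obj V s -> pm_obj W s) : Prop :=
  (forall s, is_linear (f s)) /\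
  (forall s t (h : lept s t) x, f t (pm_map V h x) = pm_map W h (f s x)).

Definition qtame (V : pmod) : Prop :=
  forall s t (h : lept s t), llt s t -> finite_rank (pm_map V h).

End PersMod.
Arguments pm_obj {k R n} p _.
Arguments pm_map {k R n} p {s t} _ _.

(* Main.v *)
Require Import Defs.
From HB Require Import structures.
From mathcomp Require Import all_boot all_order all_algebra.
From mathcomp Require Import reals.
From mathcomp Require Import lra.
Import Order.TTheory GRing.Theory Num.Theory.
Local Open Scope ring_scope.

Section Aux.
Variable k : fieldType.

Lemma lin0 (U W : lmodType k) (f : U -> W) : is_linear f -> f 0 = 0.
Proof.
move=> hf; have := hf 1 0 0; rewrite !scale1r addr0 => e.
by apply: (@addrI _ (f 0)); rewrite addr0 -e.
Qed.

Lemma linZ (U W : lmodType k) (f : U -> W) a x : is_linear f -> f (a *: x) = a *: f x.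
Proof. by move=> hf; rewrite -[a *: x]addr0 hf lin0 // addr0. Qed.

Lemma linD (U W : lmodType k) (f : U -> W) x y : is_linear f -> f (x + y) = f x + f y.
Proof. by move=> hf; rewrite -{1}[x]scale1r hf scale1r. Qed.

Lemma fr_comp (U W X : lmodType k) (h : U -> W) (g : W -> X) :
  is_linear g -> finite_rank h -> finite_rank (g \o h).
Proof.
move=> gl [r hr]; exists (map g r) => x /=; have [c ->] := hr x.
rewrite size_map; exists c => /=.
apply: (big_rec2 (fun y1 y2 => g y1 = y2)); first exact: lin0.
move=> i y1 y2 _ <-; rewrite linD // linZ //.
by rewrite (nth_map 0) // ltn_ord.
Qed.

Lemma fr_pre (T U W : lmodType k) (h : U -> W) (a : T -> U) :
  finite_rank h -> finite_rank (h \o a).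
Proof. by move=> [r hr]; exists r => x; exact: hr. Qed.

Lemma fr_ext (U W : lmodType k) (f g : U -> W) :
  (forall x, f x = g x) -> finite_rank g -> finite_rank f.
Proof. by move=> e [r hr]; exists r => x; rewrite e; exact: hr. Qed.

Lemma lin_comp (U W X : lmodType k) (f : U -> W) (g : W -> X) :
  is_linear f -> is_linear g -> is_linear (g \o f).
Proof. by move=> hf hg a x y /=; rewrite hf hg. Qed.
End Aux.

Lemma eps_exists (R : realType) (n : nat) (s t : pt R n) :
  llt s t -> exists e : R, 0 < e /\ forall i, e <= t i - s i.
Proof.
move/forallP=> h.
suff [e [e0 he]] : exists e : R, 0 < e /\ forall i, i \in enum 'I_n -> e <= t i - s i.
  by exists e; split => // i; apply: he; rewrite mem_enum.
elim: (enum 'I_n) => [|j l [e [e0 he]]]; first by exists 1.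
exists (Num.min e (t j - s j)); split.
  by rewrite lt_min e0 subr_gt0 h.
move=> i; rewrite inE => /orP [/eqP -> | il]; rewrite ge_min ?lexx ?orbT //.
by rewrite he.
Qed.

Theorem lemma4p3 (k : fieldType) (R : realType) (n : nat) (V : pmod k R n) :
  (forall eps : R, 0 < eps ->
     exists (W : pmod k R n)
            (a : forall s, pm_obj V s -> pm_obj W s)
            (b : forall s, pm_obj W s -> pm_obj (shift_mod V eps) s),
       [/\ qtame W, pmorph a, pmorph b &
           forall s (h : lept s (shift_pt eps s)) x, b s (a s x) = pm_map V h x]) ->
  qtame V.
Proof.
move=> H s t hst lst.
have [e [e0 he]] := @eps_exists R n s t lst.
set eps := e / 3.
have eps0 : 0 < eps by rewrite /eps; lra.
have [W [a [b [qW [al an] [bl bn] hba]]]] := H eps eps0.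
set s' := shift_pt eps s.
set u := shift_pt eps s'.
have hss' : lept s s' by apply/forallP => i; rewrite /s' /shift_pt; lra.
have lss' : llt s s' by apply/forallP => i; rewrite /s' /shift_pt; lra.
have hs'u : lept s' u by apply/forallP => i; rewrite /u /shift_pt; lra.
have hut : lept u t.
  apply/forallP => i; rewrite /u /s' /shift_pt; have := he i; rewrite /eps; lra.
have hsu : lept s u.
  apply/forallP => i; rewrite /u /s' /shift_pt; rewrite /eps; lra.
pose g := fun w => pm_map V hut (b s' w).
apply: (@fr_ext _ _ _ _ (g \o (pm_map W hss' \o a s))).
  move=> x /=; rewrite /g -an hba -pm_comp.
  by rewrite (pm_comp hsu hut).
apply: fr_comp.
  apply: lin_comp; [exact: bl | idtac].
  move=> c x y; exact: (@pm_lin _ _ _ V u t hut).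
apply: fr_pre; exact: qW.
Qed.
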